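(* Let $f$ be a parabolic Dulac germ with $f(x)=x-ax^\alpha\boldsymbol\ell^m+o(x^\alpha\boldsymbol\ell^m)$ as $x\to0^+$, where $a>0$, $\alpha>1$, $m\in\mathbb Z$, $m\le0$. Let $g=\mathrm{id}-f$ and let $x_0>0$ be close to $0$. Let $A_f(x_0,\varepsilon)$ and $A_f^c(x_0,\varepsilon)$ be the discrete and continuous time lengths of the $\varepsilon$-neighborhood of the orbit of $x_0$ (defined below). Then $$A_f^c(x_0,\varepsilon)-A_f(x_0,\varepsilon)=\varepsilon^{2-\frac1\alpha}\boldsymbol\ell(\varepsilon)^{\frac m\alpha}\,k(\varepsilon),$$ where $k(\varepsilon)=O(1)$ as $\varepsilon\to0^+$ and $k$ is high-amplitude oscillatory at $0$; in particular $k$ has no power-logarithm asymptotic behavior, and $A_f^c(x_0,\varepsilon)-A_f(x_0,\varepsilon)=O(\varepsilon^{1+\delta})$ for some $\delta>0$.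
   Context: $\boldsymbol\ell(x)=-1/\log x$, $\boldsymbol\ell_2=\boldsymbol\ell\circ\boldsymbol\ell$. A Dulac series is $\widehat f=\sum_{i\ge1}P_i(\boldsymbol\ell^{-1})x^{\alpha_i}$ with $P_i$ real polynomials and $(\alpha_i)$ a positive, strictly increasing, finite or finitely generated sequence tending to $+\infty$. A Dulac germ is a germ $f$ analytic on some $(0,d)$ such that $f-\sum_{i\le n}P_i(\boldsymbol\ell^{-1})x^{\alpha_i}=o(x^{\alpha_n})$ for every $n$ (for a Dulac series, its Dulac expansion) and which extends to a bounded analytic function on a standard quadratic domain in the sense of Ilyashenko; it is parabolic if $P_1\equiv1$, $\alpha_1=1$ and $f\ne\mathrm{id}$. Discrete length: with $x_n=f^{\circ n}(x_0)$ and $n_\varepsilon$ the integer with $x_{n_\varepsilon}-x_{n_\varepsilon+1}\le2\varepsilon<x_{n_\varepsilon-1}-x_{n_\varepsilon}$, $A_f(x_0,\varepsilon)=x_{n_\varepsilon}+2\varepsilon+2\varepsilon n_\varepsilon$. Continuous length: $f$ is (by known results) the time-one map of the flow $\{f^t\}$ of an analytic vector field $\xi(x)\frac{d}{dx}$ on $(0,d)$ satisfying $\xi(x)\sim-ax^\alpha\boldsymbol\ell^m$, $\xi'(x)\sim-a\alpha x^{\alpha-1}\boldsymbol\ell^m$ and $\xi=-g-\tfrac12\xi\xi'+o(x^{2\alpha-1}\boldsymbol\ell^{2m})$ as $x\to0^+$, with Fatou coordinate $\Psi$, $\Psi'=1/\xi$, $\Psi(f^t(x))=\Psi(x)+t$.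 The continuous critical time $\tau_\varepsilon$ is defined by $f^{\tau_\varepsilon}(x_0)-f^{\tau_\varepsilon+1}(x_0)=2\varepsilon$, and $A^c_f(x_0,\varepsilon)=f^{\tau_\varepsilon}(x_0)+2\varepsilon+2\varepsilon\tau_\varepsilon$. A function $h$ is high-amplitude oscillatory at $0$ if there are sequences $\varepsilon_n^1\to0$, $\varepsilon_n^2\to0$ and reals $A<B$ with $h(\varepsilon_n^1)<A<B<h(\varepsilon_n^2)$ for all $n$. *)

(* Defs.v *)
From Stdlib Require Import Reals Lra List ZArith.
Open Scope R_scope.

(* l(x) = -1/log x ;  note l^{-1}(x) = -log x *)
Definition ell (x : R) : R := - / ln x.

Definition little_o (u v : R -> R) : Prop :=
  forall eps, 0 < eps -> exists delta, 0 < delta /\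
    forall x, 0 < x < delta -> Rabs (u x) <= eps * Rabs (v x).

Definition asymp_equiv (u v : R -> R) : Prop :=
  little_o (fun x => u x - v x) v.

Definition real_analytic_on (a b : R) (u : R -> R) : Prop :=
  forall x0, a < x0 < b -> exists r, 0 < r /\ exists c : nat -> R,
    forall x, Rabs (x - x0) < r ->
      infinite_sum (fun n => c n * (x - x0) ^ n) (u x).

Definition Cx := (R * R)%type.
Definition Cadd (z w : Cx) : Cx := (fst z + fst w, snd z + snd w).
Definition Csub (z w : Cx) : Cx := (fst z - fst w, snd z - snd w).
Definition Cmul (z w : Cx) : Cx :=
  (fst z * fst w - snd z * snd w, fst z * snd w + snd z * fst w).
Definition Cnorm (z : Cx) : R := sqrt (fst z ^ 2 + snd z ^ 2).
Definition Csqrt (z : Cx) : Cx :=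
  let r := Cnorm z in
  (sqrt ((r + fst z) / 2),
   (if Rle_dec 0 (snd z) then 1 else -1) * sqrt ((r - fst z) / 2)).

(* Ilyashenko: phi_C(zeta) = zeta + C (zeta+1)^{1/2}; the standard quadratic
   domain, in the logarithmic chart zeta = -log z, is phi_C(C^+). *)
Definition phiC (C : R) (z : Cx) : Cx :=
  Cadd z (Cmul (C, 0) (Csqrt (Cadd z (1, 0)))).
Definition in_std_quad_domain (C : R) (w : Cx) : Prop :=
  exists z : Cx, 0 < fst z /\ w = phiC C z.

Definition holomorphic_on (U : Cx -> Prop) (F : Cx -> Cx) : Prop :=
  forall z, U z -> exists L : Cx, forall eps, 0 < eps -> exists delta, 0 < delta /\
    forall h, 0 < Cnorm h < delta -> U (Cadd z h) ->
      Cnorm (Csub (Csub (F (Cadd z h)) (F z)) (Cmul L h)) <= eps * Cnorm h.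

(* real polynomial given by its coefficient list (constant term first) *)
Definition peval (p : list R) (y : R) : R :=
  fold_right (fun c acc => c + y * acc) 0 p.

Inductive in_semigroup (gens : list R) : R -> Prop :=
| sg_gen b : In b gens -> in_semigroup gens b
| sg_add u v : in_semigroup gens u -> in_semigroup gens v -> in_semigroup gens (u + v).

Definition dulac_partial (P : nat -> list R) (alpha : nat -> R) (n : nat) (x : R) : R :=
  sum_f_R0 (fun i => peval (P i) (- ln x) * Rpower x (alpha i)) n.

(* (P,alpha) is a Dulac expansion of f.  Finite series are represented by
   P_i = 0 for i large (exponents padded inside the semigroup). *)
Definition dulac_expansion (f : R -> R) (P : nat -> list R) (alpha : nat -> R) : Prop :=
  0 < alpha 0%nat /\
  (forall i, alpha i < alpha (S i)) /\
  (forall M, exists N, forall i, (N <= i)%nat -> M < alpha i) /\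
  (exists gens : list R, Forall (fun b => 0 < b) gens /\
      forall i, in_semigroup gens (alpha i)) /\
  (forall n, little_o (fun x => f x - dulac_partial P alpha n x)
                      (fun x => Rpower x (alpha n))).

Definition dulac_germ_with (f : R -> R) (P : nat -> list R) (alpha : nat -> R) : Prop :=
  (exists d, 0 < d /\ real_analytic_on 0 d f) /\
  dulac_expansion f P alpha /\
  (exists C, 0 < C /\ exists F : Cx -> Cx,
     holomorphic_on (in_std_quad_domain C) F /\
     (exists M, forall w, in_std_quad_domain C w -> Cnorm (F w) <= M) /\
     (exists s0, forall s, s0 < s -> F (s, 0) = (f (exp (- s)), 0))).

Definition parabolic_dulac (f : R -> R) : Prop :=
  (exists P alpha, dulac_germ_with f P alpha /\
     alpha 0%nat = 1 /\ forall y, peval (P 0%nat) y = 1) /\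
  ~ (exists delta, 0 < delta /\ forall x, 0 < x < delta -> f x = x).

Fixpoint iterate (f : R -> R) (n : nat) (x : R) : R :=
  match n with O => x | S k => f (iterate f k x) end.

Definition disc_crit (f : R -> R) (x0 eps : R) (n : nat) : Prop :=
  (1 <= n)%nat /\
  iterate f n x0 - iterate f (S n) x0 <= 2 * eps /\
  2 * eps < iterate f (n - 1) x0 - iterate f n x0.

Definition disc_length (f : R -> R) (x0 eps : R) (n : nat) : R :=
  iterate f n x0 + 2 * eps + 2 * eps * INR n.

(* y = f^t(x), the flow being given through the Fatou coordinate Psi on (0,d):
   Psi(f^t(x)) = Psi(x) + t *)
Definition flow_pt (d : R) (Psi : R -> R) (x t y : R) : Prop :=
  0 < y < d /\ Psi y = Psi x + t.

Definition cont_crit (d : R) (Psi : R -> R) (x0 eps tau y : R) : Prop :=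
  0 <= tau /\ flow_pt d Psi x0 tau y /\
  exists y1, flow_pt d Psi x0 (tau + 1) y1 /\ y - y1 = 2 * eps.

Definition cont_length (eps tau y : R) : R := y + 2 * eps + 2 * eps * tau.

Definition high_amplitude_oscillatory (k : R -> R) : Prop :=
  exists (e1 e2 : nat -> R) (A B : R),
    (forall n, 0 < e1 n) /\ (forall n, 0 < e2 n) /\
    Un_cv e1 0 /\ Un_cv e2 0 /\ A < B /\
    forall n, k (e1 n) < A /\ B < k (e2 n).

(* Main.v *)
Require Import Defs.
From Stdlib Require Import Reals Lra Lia Psatz ZArith List Classical ClassicalEpsilon.
From Coquelicot Require Import Coquelicot.
Open Scope R_scope.


Lemma mvt (F dF : R->R) a b : a < b ->
  (forall c, a<=c<=b -> is_derive F c (dF c)) ->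
  exists c, a<c<b /\ F b - F a = dF c * (b-a).
Proof.
  intros Hab H. destruct (MVT_cor2 F dF a b Hab) as [c [Hc1 Hc2]].
  - intros c Hc. apply is_derive_Reals. now apply H.
  - exists c. split; auto.
Qed.

Lemma interp (P dP ddP : R -> R) p u q : p < u < q ->
 (forall t, p<=t<=q -> is_derive P t (dP t)) ->
 (forall t, p<=t<=q -> is_derive dP t (ddP t)) ->
 exists c, p<c<q /\
   P u = P q + (u - q)/(p - q) * (P p - P q) + (u-p)*(u-q)/2 * ddP c.
Proof.
  intros Hu HP HdP.
  set (K := (P u - P q - (u-q)/(p-q)*(P p - P q)) / ((u-p)*(u-q))).
  set (h := fun t => P t - P q - (t-q)/(p-q)*(P p - P q) - K*((t-p)*(t-q))).
  set (h1 := fun t => dP t - (P p - P q)/(p-q) - K*(2*t - p - q)).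
  set (h2 := fun t => ddP t - 2*K).
  assert (Hh : forall t, p<=t<=q -> is_derive h t (h1 t)).
  { intros t Ht. unfold h, h1. auto_derive.
    - exists (dP t). now apply HP.
    - replace (Derive (fun x => P x) t) with (dP t) by (symmetry; apply is_derive_unique; now apply HP). field. lra. }
  assert (Hh1 : forall t, p<=t<=q -> is_derive h1 t (h2 t)).
  { intros t Ht. unfold h1, h2. auto_derive.
    - exists (ddP t). now apply HdP.
    - replace (Derive (fun x => dP x) t) with (ddP t) by (symmetry; apply is_derive_unique; now apply HdP). ring. }
  assert (hp : h p = 0) by (unfold h; field; lra).
  assert (hq : h q = 0) by (unfold h; field; lra).
  assert (hu : h u = 0).
  { unfold h, K. field. split; lra. }
  destruct (mvt h h1 p u) as [c1 [Hc1 E1]]. lra. intros; apply Hh; lra.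
  destruct (mvt h h1 u q) as [c2 [Hc2 E2]]. lra. intros; apply Hh; lra.
  assert (h1c1 : h1 c1 = 0).
  { rewrite hu, hp in E1. destruct (Rmult_integral (h1 c1) (u-p)); [lra|auto|lra]. }
  assert (h1c2 : h1 c2 = 0).
  { rewrite hu, hq in E2. destruct (Rmult_integral (h1 c2) (q-u)); [lra|auto|lra]. }
  destruct (mvt h1 h2 c1 c2) as [c [Hc E]]. lra. intros; apply Hh1; lra.
  rewrite h1c1, h1c2 in E.
  assert (h2c : h2 c = 0).
  { destruct (Rmult_integral (h2 c) (c2-c1)); [lra|auto|lra]. }
  exists c. split. lra. unfold h2 in h2c.
  assert (ddP c = 2*K) by lra. rewrite H. unfold K. field. split; lra.
Qed.

Lemma ln_le_sub1 t : 0 < t -> ln t <= t - 1.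
Proof. intros Ht. pose proof (exp_ineq1_le (ln t)). rewrite exp_ln in H; lra. Qed.

Lemma logbound q g : 0 <= q -> 0 < g -> exists C, forall L, 0 < L -> q * ln L <= g*L + C.
Proof.
  intros Hq Hg. set (lam := g/(q+1)).
  assert (Hl : 0 < lam) by (unfold lam; apply Rdiv_lt_0_compat; lra).
  exists (q * (-1 - ln lam)). intros L HL.
  assert (HlL : 0 < lam*L) by (apply Rmult_lt_0_compat; lra).
  pose proof (ln_le_sub1 (lam*L) HlL) as H. rewrite ln_mult in H by lra.
  assert (H1 : ln L <= lam * L - 1 - ln lam) by lra.
  assert (H2 : q * lam <= g).
  { unfold lam. apply Rmult_le_reg_r with (q+1). lra.
    replace (q * (g / (q + 1)) * (q + 1)) with (q*g) by (field; lra). nra. }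
  assert (q * ln L <= q * (lam * L - 1 - ln lam)) by (apply Rmult_le_compat_l; lra).
  assert (q*lam*L <= g*L) by (apply Rmult_le_compat_r; lra).
  nra.
Qed.

Definition W (al p x : R) := exp (al * ln x + p * ln (- ln x)).

Lemma W_pos al p x : 0 < W al p x.
Proof. apply exp_pos. Qed.

Lemma ell_pos x : 0 < x < 1 -> 0 < ell x.
Proof. intros H. unfold ell. assert (ln x < 0) by (rewrite <- ln_1; apply ln_increasing; lra).
  replace (- / ln x) with (/ (- ln x)) by (field; lra). apply Rinv_0_lt_compat; lra. Qed.

Lemma ln_ell x : 0 < x < 1 -> ln (ell x) = - ln (- ln x).
Proof. intros H. assert (ln x < 0) by (rewrite <- ln_1; apply ln_increasing; lra).
  unfold ell. replace (- / ln x) with (/ (- ln x)) by (field; lra). rewrite ln_Rinv by lra. ring. Qed.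

Lemma W_conv al m x : 0 < x < 1 ->
  Rpower x al * powerRZ (ell x) m = W al (- IZR m) x.
Proof.
  intros H. rewrite powerRZ_Rpower by (apply ell_pos; auto).
  unfold Rpower, W. rewrite <- exp_plus. f_equal. rewrite ln_ell by auto. ring.
Qed.

Lemma W_conv1 al m x : 0 < x < 1 ->
  Rpower x (al - 1) * powerRZ (ell x) m = W al (- IZR m) x / x.
Proof.
  intros H. rewrite powerRZ_Rpower by (apply ell_pos; auto).
  unfold Rpower, W. rewrite <- exp_plus. rewrite ln_ell by auto.
  replace ((al - 1) * ln x + IZR m * - ln (- ln x)) with ((al * ln x + - IZR m * ln (- ln x)) + - ln x) by ring.
  rewrite exp_plus, exp_Ropp, exp_ln by lra. field. lra.
Qed.

Lemma N_conv al m e : 0 < e < 1 ->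
  Rpower e (2 - / al) * Rpower (ell e) (IZR m / al) =
  exp ((2 - /al) * ln e + (- IZR m / al) * ln (- ln e)).
Proof.
  intros H. unfold Rpower. rewrite <- exp_plus. rewrite ln_ell by auto. f_equal. unfold Rdiv. ring.
Qed.

Record Setting (f xi dxi Psi : R -> R) (a al p d x1 : R) : Prop := {
 Sa : 0 < a; Sal : 1 < al; Sp : 0 <= p; Sx1 : 0 < x1; Sx1d : x1 <= d; Sx13 : x1 <= /3; Sx1a : x1 <= a/4;
 Sxi_d : forall x, 0<x<d -> derivable_pt_lim xi x (dxi x);
 Sxi_neg : forall x, 0<x<d -> xi x < 0;
 SPsi_d : forall x, 0<x<d -> derivable_pt_lim Psi x (/ xi x);
 Sf : forall x, 0<x<d -> 0 < f x < d /\ Psi (f x) = Psi x + 1;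
 Sxi_b : forall x, 0<x<x1 -> -(3/2)*a*W al p x <= xi x <= -(1/2)*a*W al p x;
 Sdxi_b : forall x, 0<x<x1 -> -(3/2)*a*al*(W al p x / x) <= dxi x <= -(1/2)*a*al*(W al p x/x);
 Sg_b : forall x, 0<x<x1 -> (1/2)*a*W al p x <= x - f x <= (3/2)*a*W al p x;
 Sg_small : forall x, 0<x<x1 -> (3/2)*a*W al p x <= x/2 }.

Arguments Sa {f xi dxi Psi a al p d x1}. Arguments Sal {f xi dxi Psi a al p d x1}.
Arguments Sp {f xi dxi Psi a al p d x1}. Arguments Sx1 {f xi dxi Psi a al p d x1}.
Arguments Sx1d {f xi dxi Psi a al p d x1}. Arguments Sx13 {f xi dxi Psi a al p d x1}.
Arguments Sx1a {f xi dxi Psi a al p d x1}. Arguments Sxi_d {f xi dxi Psi a al p d x1}.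
Arguments Sxi_neg {f xi dxi Psi a al p d x1}. Arguments SPsi_d {f xi dxi Psi a al p d x1}.
Arguments Sf {f xi dxi Psi a al p d x1}. Arguments Sxi_b {f xi dxi Psi a al p d x1}.
Arguments Sdxi_b {f xi dxi Psi a al p d x1}. Arguments Sg_b {f xi dxi Psi a al p d x1}.
Arguments Sg_small {f xi dxi Psi a al p d x1}.

Lemma Psi_dec f xi dxi Psi a al p d x1 : Setting f xi dxi Psi a al p d x1 ->
  forall x y, 0 < x -> x < y -> y < d -> Psi y < Psi x.
Proof.
  intros S x y Hx Hxy Hy.
  destruct (mvt Psi (fun t => / xi t) x y Hxy) as [c [Hc E]].
  { intros c Hc. apply is_derive_Reals. apply (SPsi_d S). lra. }
  assert (xi c < 0) by (apply (Sxi_neg S); lra).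
  assert (/ xi c < 0) by (apply Rinv_lt_0_compat; auto).
  assert (/ xi c * (y - x) < 0) by (apply Rmult_neg_pos; lra) || nra.
  lra.
Qed.

Lemma Psi_le f xi dxi Psi a al p d x1 : Setting f xi dxi Psi a al p d x1 ->
  forall x y, 0 < x < d -> 0 < y < d -> Psi x <= Psi y -> y <= x.
Proof.
  intros S x y Hx Hy H. destruct (Rle_or_lt y x); auto.
  pose proof (Psi_dec _ _ _ _ _ _ _ _ _ S x y); lra.
Qed.

Lemma Psi_inj f xi dxi Psi a al p d x1 : Setting f xi dxi Psi a al p d x1 ->
  forall x y, 0 < x < d -> 0 < y < d -> Psi x = Psi y -> y = x.
Proof.
  intros S x y Hx Hy H. pose proof (Psi_le _ _ _ _ _ _ _ _ _ S x y Hx Hy).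
  pose proof (Psi_le _ _ _ _ _ _ _ _ _ S y x Hy Hx). lra.
Qed.

Lemma f_lt f xi dxi Psi a al p d x1 : Setting f xi dxi Psi a al p d x1 ->
  forall x, 0 < x < d -> f x < x.
Proof.
  intros S x Hx. destruct (Sf S x Hx) as [H1 H2].
  destruct (Rlt_or_le (f x) x); auto.
  pose proof (Psi_le _ _ _ _ _ _ _ _ _ S x (f x) Hx H1 ltac:(lra)).
  assert (f x = x) by lra.
  rewrite H3 in H2. lra.
Qed.

Lemma f_incr f xi dxi Psi a al p d x1 : Setting f xi dxi Psi a al p d x1 ->
  forall x y, 0 < x -> x < y -> y < d -> f x < f y.
Proof.
  intros S x y Hx Hxy Hy. destruct (Sf S x ltac:(lra)) as [H1 H2].
  destruct (Sf S y ltac:(lra)) as [H3 H4].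
  pose proof (Psi_dec _ _ _ _ _ _ _ _ _ S x y Hx Hxy Hy).
  destruct (Rlt_or_le (f x) (f y)); auto.
  pose proof (Psi_le _ _ _ _ _ _ _ _ _ S (f y) (f x) H3 H1 ltac:(lra)).
  assert (Heq : f x = f y) by lra. rewrite Heq in H2. lra.
Qed.

Lemma xi_dec f xi dxi Psi a al p d x1 : Setting f xi dxi Psi a al p d x1 ->
  forall x y, 0 < x -> x < y -> y < x1 -> xi y < xi x.
Proof.
  intros S x y Hx Hxy Hy.
  destruct (mvt xi dxi x y Hxy) as [c [Hc E]].
  { intros c Hc. apply is_derive_Reals. apply (Sxi_d S). pose proof (Sx1d S). lra. }
  destruct (Sdxi_b S c ltac:(lra)) as [_ H].
  assert (0 < W al p c / c) by (apply Rdiv_lt_0_compat; [apply W_pos|lra]).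
  pose proof (Sa S). pose proof (Sal S).
  assert (0 < a*al*(W al p c / c)) by (apply Rmult_lt_0_compat; [apply Rmult_lt_0_compat; lra | auto]).
  assert (dxi c < 0) by lra.
  assert (dxi c * (y - x) < 0) by (apply Rmult_neg_pos; lra) || nra.
  lra.
Qed.

Lemma pair_cmp f xi dxi Psi a al p d x1 : Setting f xi dxi Psi a al p d x1 ->
  forall x x', 0 < x -> x < x' -> x' < x1 -> f x' <= x -> x - f x < x' - f x'.
Proof.
  intros S x x' Hx Hxx' Hx' Hf. pose proof (Sx1d S).
  destruct (Sf S x ltac:(lra)) as [H1 H2].
  destruct (Sf S x' ltac:(lra)) as [H3 H4].
  pose proof (f_incr _ _ _ _ _ _ _ _ _ S x x' Hx Hxx' ltac:(lra)) as Hff.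
  destruct (mvt Psi (fun t => / xi t) x x' Hxx') as [c1 [Hc1 E1]].
  { intros c Hc. apply is_derive_Reals. apply (SPsi_d S). lra. }
  destruct (mvt Psi (fun t => / xi t) (f x) (f x') Hff) as [c2 [Hc2 E2]].
  { intros c Hc. apply is_derive_Reals. apply (SPsi_d S). lra. }
  assert (Hxi : xi c1 < xi c2) by (apply (xi_dec _ _ _ _ _ _ _ _ _ S); lra).
  assert (N1 : xi c1 < 0) by (apply (Sxi_neg S); lra).
  assert (N2 : xi c2 < 0) by (apply (Sxi_neg S); lra).
  assert (E : / xi c1 * (x' - x) = / xi c2 * (f x' - f x)) by lra.
  assert (E' : (x' - x) * xi c2 = (f x' - f x) * xi c1).
  { apply (Rmult_eq_compat_l (xi c1 * xi c2)) in E.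
    replace (xi c1 * xi c2 * (/ xi c1 * (x' - x))) with ((x'-x) * xi c2) in E by (field; lra).
    replace (xi c1 * xi c2 * (/ xi c2 * (f x' - f x))) with ((f x'-f x) * xi c1) in E by (field; lra).
    auto. }
  nra.
Qed.

Lemma Psi_mono f xi dxi Psi a al p d x1 : Setting f xi dxi Psi a al p d x1 ->
  forall x y, 0 < x -> x <= y -> y < d -> Psi y <= Psi x.
Proof.
  intros S x y Hx Hxy Hy. destruct (Rle_lt_or_eq_dec x y Hxy).
  - left; apply (Psi_dec _ _ _ _ _ _ _ _ _ S); auto.
  - subst; lra.
Qed.

Lemma Psi_cont f xi dxi Psi a al p d x1 : Setting f xi dxi Psi a al p d x1 ->
  forall x, 0 < x < d -> continuity_pt Psi x.
Proof.
  intros S x Hx. apply derivable_continuous_pt. exists (/ xi x). apply (SPsi_d S); auto.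
Qed.

Lemma f_cont f xi dxi Psi a al p d x1 : Setting f xi dxi Psi a al p d x1 ->
  forall x, 0 < x < d -> continuity_pt f x.
Proof.
  intros S x Hx. destruct (Sf S x Hx) as [Hfx HPx].
  pose proof (Psi_cont _ _ _ _ _ _ _ _ _ S x Hx) as HC.
  unfold continuity_pt, continue_in, limit1_in, limit_in in *. simpl in *.
  intros e He.
  set (e' := Rmin e (Rmin (f x/2) ((d - f x)/2))).
  assert (He' : 0 < e' /\ e' <= e /\ e' <= f x / 2 /\ e' <= (d - f x)/2).
  { unfold e'. repeat split.
    - repeat apply Rmin_pos; lra.
    - apply Rmin_l.
    - eapply Rle_trans; [apply Rmin_r|apply Rmin_l].
    - eapply Rle_trans; [apply Rmin_r|apply Rmin_r]. }
  set (P1 := Psi (f x - e') - Psi (f x)).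
  set (P2 := Psi (f x) - Psi (f x + e')).
  assert (HP1 : 0 < P1).
  { unfold P1. pose proof (Psi_dec _ _ _ _ _ _ _ _ _ S (f x - e') (f x)). lra. }
  assert (HP2 : 0 < P2).
  { unfold P2. pose proof (Psi_dec _ _ _ _ _ _ _ _ _ S (f x) (f x + e')). lra. }
  destruct (HC (Rmin P1 P2) ltac:(apply Rmin_pos; lra)) as [d0 [Hd0 Hd]].
  exists (Rmin d0 (Rmin (x/2) ((d-x)/2))). split.
  { repeat apply Rmin_pos; lra. }
  intros x' [_ Hx'].
  destruct (Req_dec x' x) as [Heqx|Hne].
  { subst x'. unfold R_dist. replace (f x - f x) with 0 by ring. rewrite Rabs_R0; lra. }
  assert (Hb : Rabs (x' - x) < d0 /\ Rabs (x' - x) < x/2 /\ Rabs (x' - x) < (d-x)/2).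
  { unfold R_dist in Hx'. repeat split.
    - eapply Rlt_le_trans; [apply Hx'|apply Rmin_l].
    - eapply Rlt_le_trans; [apply Hx'|]. eapply Rle_trans; [apply Rmin_r|apply Rmin_l].
    - eapply Rlt_le_trans; [apply Hx'|]. eapply Rle_trans; [apply Rmin_r|apply Rmin_r]. }
  destruct Hb as [Hb1 [Hb2 Hb3]].
  apply Rabs_def2 in Hb2. apply Rabs_def2 in Hb3.
  assert (Hx'd : 0 < x' < d) by lra.
  assert (HPsi : R_dist (Psi x') (Psi x) < Rmin P1 P2).
  { apply Hd. split; [split; [exact I|]|].
    - intro Heq. apply Hne. auto.
    - unfold R_dist; auto. }
  unfold R_dist in HPsi. apply Rabs_def2 in HPsi.
  pose proof (Rmin_l P1 P2). pose proof (Rmin_r P1 P2).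
  destruct (Sf S x' Hx'd) as [Hfx' HPx'].
  assert (U1 : f x' < f x + e').
  { destruct (Rlt_or_le (f x') (f x + e')); auto.
    pose proof (Psi_mono _ _ _ _ _ _ _ _ _ S (f x + e') (f x') ltac:(lra) H1 ltac:(lra)).
    unfold P2 in *. lra. }
  assert (U2 : f x - e' < f x').
  { destruct (Rlt_or_le (f x - e') (f x')); auto.
    pose proof (Psi_mono _ _ _ _ _ _ _ _ _ S (f x') (f x - e') ltac:(lra) H1 ltac:(lra)).
    unfold P1 in *. lra. }
  unfold R_dist. apply Rabs_def1; lra.
Qed.

Lemma orb_basic f xi dxi Psi a al p d x1 : Setting f xi dxi Psi a al p d x1 ->
  forall x0, 0 < x0 < x1 -> forall k,
  0 < iterate f k x0 <= x0 /\ Psi (iterate f k x0) = Psi x0 + INR k.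
Proof.
  intros HS x0 Hx0. pose proof (Sx1d HS). induction k as [|k IH].
  - simpl. split; lra.
  - destruct IH as [[H1 H2] H3]. simpl iterate.
    destruct (Sf HS (iterate f k x0) ltac:(lra)) as [H4 H5].
    pose proof (f_lt _ _ _ _ _ _ _ _ _ HS (iterate f k x0) ltac:(lra)).
    rewrite S_INR. split; lra.
Qed.

Lemma orb_dec f xi dxi Psi a al p d x1 : Setting f xi dxi Psi a al p d x1 ->
  forall x0, 0 < x0 < x1 -> forall k, iterate f (S k) x0 < iterate f k x0.
Proof.
  intros HS x0 Hx0 k. pose proof (Sx1d HS). simpl iterate.
  destruct (orb_basic _ _ _ _ _ _ _ _ _ HS x0 Hx0 k) as [[H1 H2] _].
  apply (f_lt _ _ _ _ _ _ _ _ _ HS). lra.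
Qed.

Lemma orb_small f xi dxi Psi a al p d x1 : Setting f xi dxi Psi a al p d x1 ->
  forall x0, 0 < x0 < x1 -> forall z, 0 < z -> exists k, iterate f k x0 < z.
Proof.
  intros HS x0 Hx0 z Hz. pose proof (Sx1d HS).
  destruct (classic (exists k, iterate f k x0 < z)) as [Hex|Hex]; auto. exfalso.
  assert (Hk : forall k, z <= iterate f k x0).
  { intros k. destruct (Rle_or_lt z (iterate f k x0)); auto. exfalso; apply Hex; eauto. }
  assert (Hzx : z <= x0) by (apply (Hk 0%nat)).
  destruct (INR_archimed 1 (Psi z - Psi x0) ltac:(lra)) as [k Hk'].
  destruct (orb_basic _ _ _ _ _ _ _ _ _ HS x0 Hx0 k) as [[H1 H2] H3].
  pose proof (Psi_mono _ _ _ _ _ _ _ _ _ HS z (iterate f k x0) Hz (Hk k) ltac:(lra)).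
  lra.
Qed.

Definition gX f x0 k := iterate f k x0 - iterate f (S k) x0.

Lemma gX_dec f xi dxi Psi a al p d x1 : Setting f xi dxi Psi a al p d x1 ->
  forall x0, 0 < x0 < x1 -> forall k, gX f x0 (S k) < gX f x0 k.
Proof.
  intros HS x0 Hx0 k. unfold gX.
  destruct (orb_basic _ _ _ _ _ _ _ _ _ HS x0 Hx0 (S k)) as [[H1 H2] _].
  destruct (orb_basic _ _ _ _ _ _ _ _ _ HS x0 Hx0 k) as [[H3 H4] _].
  pose proof (orb_dec _ _ _ _ _ _ _ _ _ HS x0 Hx0 k).
  pose proof (pair_cmp _ _ _ _ _ _ _ _ _ HS (iterate f (S k) x0) (iterate f k x0) H1 H ltac:(lra)).
  simpl iterate in *. apply H0. lra.
Qed.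

Lemma gX_mono f xi dxi Psi a al p d x1 : Setting f xi dxi Psi a al p d x1 ->
  forall x0, 0 < x0 < x1 -> forall j k, (j <= k)%nat -> gX f x0 k <= gX f x0 j.
Proof.
  intros HS x0 Hx0 j k Hjk. induction Hjk.
  - lra.
  - pose proof (gX_dec _ _ _ _ _ _ _ _ _ HS x0 Hx0 m). lra.
Qed.

Lemma disc_unique f xi dxi Psi a al p d x1 : Setting f xi dxi Psi a al p d x1 ->
  forall x0, 0 < x0 < x1 -> forall eps n n',
  disc_crit f x0 eps n -> disc_crit f x0 eps n' -> n = n'.
Proof.
  intros HS x0 Hx0 eps n n' [H1 [H2 H3]] [H4 [H5 H6]].
  destruct (Nat.lt_trichotomy n n') as [Hl|[He|Hl]]; auto; exfalso.
  - pose proof (gX_mono _ _ _ _ _ _ _ _ _ HS x0 Hx0 n (n'-1) ltac:(lia)).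
    unfold gX in H. replace (S (n'-1)) with n' in H by lia. lra.
  - pose proof (gX_mono _ _ _ _ _ _ _ _ _ HS x0 Hx0 n' (n-1) ltac:(lia)).
    unfold gX in H. replace (S (n-1)) with n in H by lia. lra.
Qed.

Lemma disc_exist f xi dxi Psi a al p d x1 : Setting f xi dxi Psi a al p d x1 ->
  forall x0, 0 < x0 < x1 -> forall eps, 0 < eps -> 2*eps < gX f x0 0 ->
  exists n, disc_crit f x0 eps n.
Proof.
  intros HS x0 Hx0 eps He Hg.
  assert (Hind : forall K, gX f x0 K <= 2*eps -> exists n, disc_crit f x0 eps n).
  { induction K as [|K IH]; intros HK.
    - lra.
    - destruct (Rle_or_lt (gX f x0 K) (2*eps)) as [H|H]; auto.
      exists (S K). unfold disc_crit. unfold gX in *.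
      replace (S K - 1)%nat with K by lia. repeat split; try lia; lra. }
  destruct (orb_small _ _ _ _ _ _ _ _ _ HS x0 Hx0 (2*eps) ltac:(lra)) as [K HK].
  apply (Hind K). unfold gX.
  destruct (orb_basic _ _ _ _ _ _ _ _ _ HS x0 Hx0 (S K)) as [[H1 H2] _]. lra.
Qed.

Lemma localize f xi dxi Psi a al p d x1 : Setting f xi dxi Psi a al p d x1 ->
  forall x0, 0 < x0 < x1 -> forall y, 0 < y < x0 ->
  exists k, (1 <= k)%nat /\ iterate f k x0 <= y < iterate f (k-1) x0.
Proof.
  intros HS x0 Hx0 y Hy.
  assert (Hind : forall K, iterate f K x0 <= y -> exists k, (1 <= k)%nat /\ iterate f k x0 <= y < iterate f (k-1) x0).
  { induction K as [|K IH]; intros HK.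
    - simpl in HK. lra.
    - destruct (Rle_or_lt (iterate f K x0) y) as [H|H]; auto.
      exists (S K). replace (S K - 1)%nat with K by lia. split; [lia|lra]. }
  destruct (orb_small _ _ _ _ _ _ _ _ _ HS x0 Hx0 y ltac:(lra)) as [K HK].
  apply (Hind K). lra.
Qed.

Lemma gy_interval f xi dxi Psi a al p d x1 : Setting f xi dxi Psi a al p d x1 ->
  forall x0, 0 < x0 < x1 -> forall k y, (1 <= k)%nat ->
  iterate f k x0 <= y < iterate f (k-1) x0 ->
  gX f x0 k <= y - f y < gX f x0 (k-1).
Proof.
  intros HS x0 Hx0 k y Hk Hy. destruct k as [|j]; [lia|].
  replace (S j - 1)%nat with j in * by lia.
  pose proof (Sx1d HS).
  destruct (orb_basic _ _ _ _ _ _ _ _ _ HS x0 Hx0 (S j)) as [[H1 H2] _].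
  destruct (orb_basic _ _ _ _ _ _ _ _ _ HS x0 Hx0 j) as [[H3 H4] _].
  unfold gX. simpl iterate in *.
  assert (Hfy : f y < f (iterate f j x0)) by (apply (f_incr _ _ _ _ _ _ _ _ _ HS); lra).
  split.
  - destruct (Rle_lt_or_eq_dec _ _ (proj1 Hy)) as [Hl|He].
    + left. apply (pair_cmp _ _ _ _ _ _ _ _ _ HS); lra.
    + rewrite <- He. lra.
  - apply (pair_cmp _ _ _ _ _ _ _ _ _ HS); lra.
Qed.

Lemma triple f xi dxi Psi a al p d x1 : Setting f xi dxi Psi a al p d x1 ->
  forall x0, 0 < x0 < x1 -> forall eps n tau y, 0 < eps -> 2*eps < gX f x0 0 ->
  disc_crit f x0 eps n -> cont_crit d Psi x0 eps tau y ->
  (1 <= n)%nat /\ iterate f n x0 <= y < iterate f (n-1) x0 /\ y - f y = 2*eps /\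
  tau = Psi y - Psi x0.
Proof.
  intros HS x0 Hx0 eps n tau y He Hg Hd [Ht [[Hy HPy] [y1 [[Hy1 HPy1] Hyy]]]].
  pose proof (Sx1d HS).
  assert (Hyx0 : y <= x0) by (apply (Psi_le _ _ _ _ _ _ _ _ _ HS); lra).
  destruct (Sf HS y Hy) as [Hfy HPfy].
  assert (y1 = f y) by (apply (Psi_inj _ _ _ _ _ _ _ _ _ HS); lra).
  subst y1.
  assert (Hy0 : y < x0).
  { destruct (Rle_lt_or_eq_dec _ _ Hyx0) as [H'|H']; auto. subst y. unfold gX in Hg. simpl in Hg. lra. }
  destruct (localize _ _ _ _ _ _ _ _ _ HS x0 Hx0 y ltac:(lra)) as [k [Hk Hky]].
  pose proof (gy_interval _ _ _ _ _ _ _ _ _ HS x0 Hx0 k y Hk Hky) as Hg'.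
  assert (Hdk : disc_crit f x0 eps k).
  { unfold disc_crit. unfold gX in Hg'. destruct k; [lia|]. 
    replace (S k - 1)%nat with k in * by lia. simpl iterate in *. repeat split; auto; lra. }
  pose proof (disc_unique _ _ _ _ _ _ _ _ _ HS x0 Hx0 eps n k Hd Hdk). subst k.
  repeat split; auto; lra.
Qed.

Lemma diff_formula f xi dxi Psi a al p d x1 : Setting f xi dxi Psi a al p d x1 ->
  forall x0, 0 < x0 < x1 -> forall eps n tau y,
  tau = Psi y - Psi x0 ->
  cont_length eps tau y - disc_length f x0 eps n =
  y - iterate f n x0 + 2*eps*(Psi y - Psi (iterate f n x0)).
Proof.
  intros HS x0 Hx0 eps n tau y Ht.
  destruct (orb_basic _ _ _ _ _ _ _ _ _ HS x0 Hx0 n) as [_ H].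
  unfold cont_length, disc_length. rewrite H, Ht. ring.
Qed.

Lemma y_unique f xi dxi Psi a al p d x1 : Setting f xi dxi Psi a al p d x1 ->
  forall x0, 0 < x0 < x1 -> forall n y y', (1 <= n)%nat ->
  iterate f n x0 <= y < iterate f (n-1) x0 ->
  iterate f n x0 <= y' < iterate f (n-1) x0 -> y - f y = y' - f y' -> y = y'.
Proof.
  intros HS x0 Hx0 n y y' Hn Hy Hy' E. pose proof (Sx1d HS).
  destruct n as [|j]; [lia|]. replace (S j - 1)%nat with j in * by lia.
  destruct (orb_basic _ _ _ _ _ _ _ _ _ HS x0 Hx0 (S j)) as [[H1 H2] _].
  destruct (orb_basic _ _ _ _ _ _ _ _ _ HS x0 Hx0 j) as [[H3 H4] _].
  simpl iterate in *.
  destruct (Rlt_or_le y y') as [Hl|Hl].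
  - assert (f y' < f (iterate f j x0)) by (apply (f_incr _ _ _ _ _ _ _ _ _ HS); lra).
    pose proof (pair_cmp _ _ _ _ _ _ _ _ _ HS y y' ltac:(lra) Hl ltac:(lra) ltac:(lra)). lra.
  - destruct (Rle_lt_or_eq_dec _ _ Hl) as [Hl'|]; auto.
    assert (f y < f (iterate f j x0)) by (apply (f_incr _ _ _ _ _ _ _ _ _ HS); lra).
    pose proof (pair_cmp _ _ _ _ _ _ _ _ _ HS y' y ltac:(lra) Hl' ltac:(lra) ltac:(lra)). lra.
Qed.

Lemma D_repr f xi dxi Psi a al p d x1 : Setting f xi dxi Psi a al p d x1 ->
  forall x0, 0 < x0 < x1 -> forall eps n y, (1 <= n)%nat ->
  iterate f n x0 <= y < iterate f (n-1) x0 -> y - f y = 2*eps ->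
  f y < iterate f n x0 /\
  exists c, f y < c < y /\
  y - iterate f n x0 + 2*eps*(Psi y - Psi (iterate f n x0)) =
  eps * (iterate f n x0 - f y) * (y - iterate f n x0) * (- dxi c / (xi c)^2).
Proof.
  intros HS x0 Hx0 eps n y Hn Hy Hg. pose proof (Sx1d HS).
  destruct n as [|j]; [lia|]. replace (S j - 1)%nat with j in * by lia.
  destruct (orb_basic _ _ _ _ _ _ _ _ _ HS x0 Hx0 (S j)) as [[H1 H2] _].
  destruct (orb_basic _ _ _ _ _ _ _ _ _ HS x0 Hx0 j) as [[H3 H4] _].
  assert (Hfy : f y < iterate f (S j) x0).
  { simpl. apply (f_incr _ _ _ _ _ _ _ _ _ HS); lra. }
  destruct (Sf HS y ltac:(lra)) as [Hfy0 HPfy].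
  split; auto.
  set (u := iterate f (S j) x0) in *.
  destruct (Rle_lt_or_eq_dec _ _ (proj1 Hy)) as [Hl|He].
  2:{ exists ((f y + y)/2). split. lra. rewrite <- He. 
      replace (u - u) with 0 by ring. ring. }
  destruct (interp Psi (fun t => / xi t) (fun t => - dxi t / (xi t)^2) (f y) u y
      ltac:(lra)) as [c [Hc E]].
  - intros t Ht. apply is_derive_Reals. apply (SPsi_d HS). lra.
  - intros t Ht. apply is_derive_inv.
    + apply is_derive_Reals. apply (Sxi_d HS). lra.
    + pose proof (Sxi_neg HS t ltac:(lra)). lra.
  - exists c. split; auto. rewrite E, HPfy. replace (f y) with (y - 2*eps) by lra. assert (0 < eps) by lra.
    field. split; [pose proof (Sxi_neg HS c ltac:(lra)); lra | lra].
Qed.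

Lemma div_cross x y z t : 0 < y -> 0 < t -> x * t <= z * y -> x / y <= z / t.
Proof.
  intros Hy Ht H. apply Rmult_le_reg_r with (y*t). nra.
  replace (x / y * (y * t)) with (x*t) by (field; lra).
  replace (z / t * (y * t)) with (z*y) by (field; lra). lra.
Qed.

Lemma ddP_bounds f xi dxi Psi a al p d x1 : Setting f xi dxi Psi a al p d x1 ->
  forall c, 0 < c < x1 ->
  (2*al/(9*a)) / (c * W al p c) <= - dxi c / (xi c)^2 <= (6*al/a) / (c * W al p c).
Proof.
  intros HS c Hc. pose proof (Sa HS). pose proof (Sal HS).
  pose proof (W_pos al p c) as Hw. set (w := W al p c) in *.
  destruct (Sxi_b HS c Hc) as [X1 X2]. destruct (Sdxi_b HS c Hc) as [Y1 Y2].
  fold w in X1, X2, Y1, Y2.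
  assert (Z1 : - dxi c * c >= (1/2)*a*al*w).
  { replace ((1/2)*a*al*w) with ((1/2)*a*al*(w/c)*c) by (field; lra).
    apply Rle_ge, Rmult_le_compat_r; lra. }
  assert (Z2 : - dxi c * c <= (3/2)*a*al*w).
  { replace ((3/2)*a*al*w) with ((3/2)*a*al*(w/c)*c) by (field; lra).
    apply Rmult_le_compat_r; lra. }
  assert (Hh : 0 < (1/2)*a*w) by nra.
  assert (Q1 : (xi c)^2 <= (9/4)*a^2*w^2).
  { replace ((xi c)^2) with ((-xi c)*(-xi c)) by ring.
    replace ((9/4)*a^2*w^2) with (((3/2)*a*w)*((3/2)*a*w)) by field.
    apply Rmult_le_compat; lra. }
  assert (Q2 : (xi c)^2 >= (1/4)*a^2*w^2).
  { replace ((xi c)^2) with ((-xi c)*(-xi c)) by ring.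
    replace ((1/4)*a^2*w^2) with (((1/2)*a*w)*((1/2)*a*w)) by field.
    apply Rle_ge, Rmult_le_compat; lra. }
  assert (Q0 : 0 < (xi c)^2) by nra.
  assert (Hcw : 0 < c * w) by nra.
  split; apply div_cross; auto.
  - assert (2*al/(9*a) * (xi c)^2 <= 2*al/(9*a) * ((9/4)*a^2*w^2)).
    { apply Rmult_le_compat_l; [|lra]. apply Rlt_le, Rdiv_lt_0_compat; lra. }
    replace (2*al/(9*a) * ((9/4)*a^2*w^2)) with ((1/2)*a*al*w*w) in H1 by (field; lra).
    nra.
  - assert (6*al/a * (xi c)^2 >= 6*al/a * ((1/4)*a^2*w^2)).
    { apply Rle_ge, Rmult_le_compat_l; [|lra]. apply Rlt_le, Rdiv_lt_0_compat; lra. }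
    replace (6*al/a * ((1/4)*a^2*w^2)) with ((3/2)*a*al*w*w) in H1 by (field; lra).
    nra.
Qed.

Lemma expo_up (al p E ly lc Ly Lc Le K1 K2: R) : 1 < al -> 0 <= p ->
  E + ln 2 <= K2 + al*ly + p*Ly -> Ly <= Le -> ly - ln 2 <= lc -> Ly <= Lc ->
  3*E + K1 - (al+1)*lc - p*Lc <=
  (K1 + (al+1)*ln 2 + (1 + /al)*(K2 - ln 2)) + (2 - /al)*E + (p/al)*Le.
Proof.
  intros Hal Hp H1 H2 H3 H4.
  assert (Hi : 0 < /al) by (apply Rinv_0_lt_compat; lra).
  assert (A1 : (1 + /al)*(E + ln 2 - K2 - p*Ly) <= (1 + /al)*(al*ly)) by (apply Rmult_le_compat_l; lra).
  assert (A2 : (1 + /al)*(al*ly) = (al+1)*ly) by (field; lra).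
  assert (A3 : (al+1)*(ly - ln 2) <= (al+1)*lc) by (apply Rmult_le_compat_l; lra).
  assert (A4 : p*Ly <= p*Lc) by (apply Rmult_le_compat_l; lra).
  assert (A5 : (p/al)*Ly <= (p/al)*Le) by (apply Rmult_le_compat_l; [apply Rmult_le_pos; lra|lra]).
  assert (A6 : (1 + /al)*(E + ln 2 - K2 - p*Ly) = E + /al*E + (1 + /al)*(ln 2 - K2) - p*Ly - (p/al)*Ly) by (field; lra).
  assert (A7 : (al+1)*(ly - ln 2) = (al+1)*ly - (al+1)*ln 2) by ring.
  lra.
Qed.

Lemma expo_low (al p E ly lc Ly Lc Le K3 K4: R) : 1 < al -> 0 <= p ->
  K4 + al*ly + p*Ly <= E + ln 2 -> Le <= ln (al+1) + Ly -> lc <= ly -> Lc <= Ly + ln 2 ->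
  (K3 - p * ln 2 - (1 + /al)*(ln 2 - K4) - (p/al)*ln (al+1)) + (2 - /al)*E + (p/al)*Le <=
  3*E + K3 - (al+1)*lc - p*Lc.
Proof.
  intros Hal Hp H1 H2 H3 H4.
  assert (Hi : 0 < /al) by (apply Rinv_0_lt_compat; lra).
  assert (A1 : (1 + /al)*(al*ly) <= (1 + /al)*(E + ln 2 - K4 - p*Ly)) by (apply Rmult_le_compat_l; lra).
  assert (A2 : (1 + /al)*(al*ly) = (al+1)*ly) by (field; lra).
  assert (A3 : (al+1)*lc <= (al+1)*ly) by (apply Rmult_le_compat_l; lra).
  assert (A4 : p*Lc <= p*(Ly + ln 2)) by (apply Rmult_le_compat_l; lra).
  assert (A5 : (p/al)*Le <= (p/al)*(ln (al+1) + Ly)) by (apply Rmult_le_compat_l; [apply Rmult_le_pos; lra|lra]).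
  assert (A6 : (1 + /al)*(E + ln 2 - K4 - p*Ly) = E + /al*E + (1 + /al)*(ln 2 - K4) - p*Ly - (p/al)*Ly) by (field; lra).
  assert (A7 : p*(Ly + ln 2) = p*Ly + p*ln 2) by ring.
  assert (A8 : (p/al)*(ln (al+1) + Ly) = (p/al)*ln (al+1) + (p/al)*Ly) by ring.
  lra.
Qed.

Lemma exp_mono x y : x <= y -> exp x <= exp y.
Proof. intros H. destruct (Rle_lt_or_eq_dec _ _ H). left; apply exp_increasing; auto. subst; lra. Qed.

Lemma ln_mono x y : 0 < x -> x <= y -> ln x <= ln y.
Proof. intros H1 H2. destruct (Rle_lt_or_eq_dec _ _ H2). left; apply ln_increasing; auto. subst; lra. Qed.

Lemma mly_ge1 y : 0 < y <= /3 -> 1 <= - ln y.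
Proof.
  intros H. assert (ln y <= ln (/3)) by (apply ln_mono; lra).
  rewrite ln_Rinv in H0 by lra.
  assert (1 <= ln 3).
  { rewrite <- (ln_exp 1). apply ln_mono. apply exp_pos. apply exp_le_3. }
  lra.
Qed.

Lemma ln2_le1 : ln 2 <= 1.
Proof. rewrite <- (ln_exp 1). apply ln_mono. lra. pose proof (exp_ineq1_le 1). lra. Qed.

Lemma ln2_pos : 0 < ln 2.
Proof. rewrite <- ln_1. apply ln_increasing; lra. Qed.

Lemma cW_exp al p c : 0 < c -> c * W al p c = exp ((al+1)*ln c + p * ln (- ln c)).
Proof.
  intros Hc. unfold W. replace ((al+1)*ln c + p * ln (- ln c)) with (ln c + (al * ln c + p * ln (- ln c))) by ring.
  rewrite (exp_plus (ln c)), exp_ln; auto.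
Qed.

Lemma ln_W al p x : ln (W al p x) = al * ln x + p * ln (- ln x).
Proof. unfold W. apply ln_exp. Qed.

Definition Nf al p e := exp ((2 - /al)*ln e + (p/al)*ln (- ln e)).
Definition Cu a al := exp (ln (6*al/a) + (al+1)*ln 2 + (1 + /al)*(ln ((3/2)*a) - ln 2)).
Definition Cl a al p := exp (ln (2*al/(9*a)) - p * ln 2 - (1 + /al)*(ln 2 - ln ((1/2)*a)) - (p/al)*ln (al+1)).

Lemma c_range f xi dxi Psi a al p d x1 : Setting f xi dxi Psi a al p d x1 ->
  forall y eps c, 0 < y < x1 -> y - f y = 2*eps -> f y < c < y ->
  0 < eps /\ eps < y /\ y/2 <= c /\ (1/2)*a*W al p y <= 2*eps <= (3/2)*a*W al p y.
Proof.
  intros HS y eps c Hy Hg Hc. destruct (Sg_b HS y Hy) as [H1 H2].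
  pose proof (Sg_small HS y Hy). pose proof (W_pos al p y). pose proof (Sa HS).
  assert (0 < (1/2)*a*W al p y) by (apply Rmult_lt_0_compat; lra).
  repeat split; lra.
Qed.

Lemma D_up f xi dxi Psi a al p d x1 : Setting f xi dxi Psi a al p d x1 ->
  forall y eps c Q, 0 < y < x1 -> y - f y = 2*eps -> f y < c < y -> 0 <= Q <= eps^2 ->
  0 <= eps * Q * (- dxi c / (xi c)^2) <= Cu a al * Nf al p eps.
Proof.
  intros HS y eps c Q Hy Hg Hc HQ.
  destruct (c_range _ _ _ _ _ _ _ _ _ HS y eps c Hy Hg Hc) as [He [Hey [Hc2 [Hg1 Hg2]]]].
  pose proof (Sa HS) as Ha. pose proof (Sal HS) as Hal. pose proof (Sp HS) as Hp.
  pose proof (Sx13 HS) as H13. pose proof (Sx1 HS).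
  destruct (ddP_bounds _ _ _ _ _ _ _ _ _ HS c ltac:(lra)) as [B1 B2].
  assert (HcW : 0 < c * W al p c) by (apply Rmult_lt_0_compat; [lra|apply W_pos]).
  assert (Hpos : 0 < (2*al/(9*a)) / (c * W al p c)).
  { apply Rdiv_lt_0_compat; auto. apply Rdiv_lt_0_compat; lra. }
  split.
  { apply Rmult_le_pos; [apply Rmult_le_pos|]; lra. }
  assert (S1 : eps * Q * (- dxi c / (xi c)^2) <= eps * eps^2 * ((6*al/a) / (c * W al p c))).
  { apply Rmult_le_compat; try lra. apply Rmult_le_pos; lra. apply Rmult_le_compat_l; lra. }
  eapply Rle_trans; [apply S1|].
  assert (R1 : eps * eps^2 * ((6*al/a) / (c * W al p c)) =
     exp (3 * ln eps + ln (6*al/a) - (al+1)*ln c - p * ln (- ln c))).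
  { rewrite cW_exp by lra.
    replace (3 * ln eps + ln (6*al/a) - (al+1)*ln c - p * ln (- ln c)) with
      (ln eps + (ln eps + (ln eps + (ln (6*al/a) + - ((al+1)*ln c + p * ln (- ln c)))))) by ring.
    rewrite (exp_plus (ln eps)), (exp_plus (ln eps)), (exp_plus (ln eps)), (exp_plus (ln (6*al/a))).
    rewrite exp_Ropp. rewrite (exp_ln eps) by lra.
    rewrite (exp_ln (6*al/a)) by (apply Rdiv_lt_0_compat; lra).
    field. split; [apply Rgt_not_eq, exp_pos| lra]. }
  rewrite R1. unfold Cu, Nf. rewrite <- exp_plus. apply exp_mono.
  assert (Hly : 0 < - ln y) by (pose proof (mly_ge1 y ltac:(lra)); lra).
  assert (Hlc : 0 < - ln c) by (assert (ln c < ln y) by (apply ln_increasing; lra); lra).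
  rewrite <- Rplus_assoc. apply (expo_up al p (ln eps) (ln y) (ln c) (ln (-ln y)) (ln (-ln c)) (ln (-ln eps))); auto.
  - assert (ln (2*eps) <= ln ((3/2)*a*W al p y)) by (apply ln_mono; lra).
    rewrite ln_mult in H0 by lra. rewrite ln_mult in H0 by (try apply W_pos; lra).
    rewrite ln_W in H0. lra.
  - apply ln_mono; auto. assert (ln eps < ln y) by (apply ln_increasing; lra). lra.
  - assert (ln (y/2) <= ln c) by (apply ln_mono; lra). unfold Rdiv in H0.
    rewrite ln_mult, ln_Rinv in H0 by lra. lra.
  - apply ln_mono; auto. assert (ln c < ln y) by (apply ln_increasing; lra). lra.
Qed.

Lemma D_low f xi dxi Psi a al p d x1 : Setting f xi dxi Psi a al p d x1 ->
  forall y eps c, 0 < y < x1 -> y - f y = 2*eps -> f y < c < y ->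
  Cl a al p * Nf al p eps <= eps * eps^2 * (- dxi c / (xi c)^2).
Proof.
  intros HS y eps c Hy Hg Hc.
  destruct (c_range _ _ _ _ _ _ _ _ _ HS y eps c Hy Hg Hc) as [He [Hey [Hc2 [Hg1 Hg2]]]].
  pose proof (Sa HS) as Ha. pose proof (Sal HS) as Hal. pose proof (Sp HS) as Hp.
  pose proof (Sx13 HS) as H13. pose proof (Sx1 HS). pose proof (Sx1a HS) as H1a.
  destruct (ddP_bounds _ _ _ _ _ _ _ _ _ HS c ltac:(lra)) as [B1 B2].
  assert (HcW : 0 < c * W al p c) by (apply Rmult_lt_0_compat; [lra|apply W_pos]).
  assert (S1 : eps * eps^2 * ((2*al/(9*a)) / (c * W al p c)) <= eps * eps^2 * (- dxi c / (xi c)^2)).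
  { apply Rmult_le_compat_l; auto. apply Rmult_le_pos; [lra|]. apply pow_le; lra. }
  eapply Rle_trans; [|apply S1].
  assert (R1 : eps * eps^2 * ((2*al/(9*a)) / (c * W al p c)) =
     exp (3 * ln eps + ln (2*al/(9*a)) - (al+1)*ln c - p * ln (- ln c))).
  { rewrite cW_exp by lra.
    replace (3 * ln eps + ln (2*al/(9*a)) - (al+1)*ln c - p * ln (- ln c)) with
      (ln eps + (ln eps + (ln eps + (ln (2*al/(9*a)) + - ((al+1)*ln c + p * ln (- ln c)))))) by ring.
    rewrite (exp_plus (ln eps)), (exp_plus (ln eps)), (exp_plus (ln eps)), (exp_plus (ln (2*al/(9*a)))).
    rewrite exp_Ropp. rewrite (exp_ln eps) by lra.
    rewrite (exp_ln (2*al/(9*a))) by (apply Rdiv_lt_0_compat; lra).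
    field. split; [apply Rgt_not_eq, exp_pos| lra]. }
  rewrite R1. unfold Cl, Nf. rewrite <- exp_plus. apply exp_mono.
  assert (Hly1 : 1 <= - ln y) by (apply mly_ge1; lra).
  assert (Hlc : 0 < - ln c) by (assert (ln c < ln y) by (apply ln_increasing; lra); lra).
  assert (HlnE : ln eps < 0) by (rewrite <- ln_1; apply ln_increasing; lra).
  rewrite <- Rplus_assoc.
  apply (expo_low al p (ln eps) (ln y) (ln c) (ln (-ln y)) (ln (-ln c)) (ln (-ln eps))); auto.
  - assert (ln ((1/2)*a*W al p y) <= ln (2*eps)).
    { apply ln_mono; auto. apply Rmult_lt_0_compat; [lra|apply W_pos]. }
    rewrite (ln_mult ((1/2)*a) (W al p y)), (ln_mult 2 eps) in H0 by (try apply W_pos; lra).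
    rewrite ln_W in H0. lra.
  -
    assert (HLy : 0 <= ln (- ln y)) by (rewrite <- ln_1; apply ln_mono; lra).
    assert (HW : exp (al * ln y) <= W al p y).
    { unfold W. apply exp_mono. assert (0 <= p * ln (- ln y)) by (apply Rmult_le_pos; lra). lra. }
    assert (HE : (al+1) * ln y <= ln eps).
    { assert (y * exp (al * ln y) <= eps).
      { assert (y * exp (al * ln y) <= (a/4) * W al p y).
        { apply Rmult_le_compat; try lra. left; apply exp_pos. }
        lra. }
      apply (ln_mono _ _ (Rmult_lt_0_compat y (exp (al * ln y)) ltac:(lra) (exp_pos _))) in H0.
      rewrite ln_mult, ln_exp in H0 by (try apply exp_pos; lra). lra. }
    assert (Hm : - ln eps <= (al+1) * (- ln y)) by lra.
    apply (ln_mono (- ln eps) _ ltac:(lra)) in Hm. rewrite ln_mult in Hm by lra. lra.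
  - left. apply ln_increasing; lra.
  - assert (ln (y/2) <= ln c) by (apply ln_mono; lra). unfold Rdiv in H0.
    rewrite ln_mult, ln_Rinv in H0 by lra.
    pose proof ln2_le1.
    assert (- ln c <= 2 * (- ln y)) by lra.
    apply (ln_mono _ _ Hlc) in H2. rewrite ln_mult in H2 by lra. lra.
Qed.

Lemma Rabs_le_elim x y : Rabs x <= y -> -y <= x <= y.
Proof. intros H. pose proof (Rle_abs (-x)). rewrite Rabs_Ropp in H0. pose proof (Rle_abs x). lra. Qed.

Lemma build_setting (f : R -> R) (a alpha : R) (m : Z) (d : R) (xi dxi Psi : R -> R) :
  0 < a -> 1 < alpha -> (m <= 0)%Z ->
  little_o (fun x => f x - (x - a * Rpower x alpha * powerRZ (ell x) m))
           (fun x => Rpower x alpha * powerRZ (ell x) m) ->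
    0 < d ->
    (forall x, 0 < x < d -> derivable_pt_lim xi x (dxi x)) ->
    (forall x, 0 < x < d -> xi x <> 0) ->
    (forall x, 0 < x < d -> derivable_pt_lim Psi x (/ xi x)) ->
    (forall x, 0 < x < d -> 0 < f x < d /\ Psi (f x) = Psi x + 1) ->
    asymp_equiv xi (fun x => - a * Rpower x alpha * powerRZ (ell x) m) ->
    asymp_equiv dxi (fun x => - a * alpha * Rpower x (alpha - 1) * powerRZ (ell x) m) ->
  exists x1, Setting f xi dxi Psi a alpha (- IZR m) d x1.
Proof.
  intros Ha Hal Hm Hf Hd Hxid Hxi0 HPsi HfP Hxi Hdxi.
  set (p := - IZR m).
  assert (Hp : 0 <= p) by (unfold p; apply IZR_le in Hm; lra).
  destruct (Hf (a/2) ltac:(lra)) as [d1 [Hd1 H1]].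
  destruct (Hxi (1/2) ltac:(lra)) as [d2 [Hd2 H2]].
  destruct (Hdxi (1/2) ltac:(lra)) as [d3 [Hd3 H3]].
  destruct (logbound p ((alpha-1)/2) Hp ltac:(lra)) as [C HC].
  set (d4 := exp (2 * (- ln (3*a) - C) / (alpha - 1))).
  assert (Hd4 : 0 < d4) by apply exp_pos.
  set (x1 := Rmin (Rmin (Rmin d1 d2) (Rmin d3 d4)) (Rmin d (Rmin (/3) (a/4)))).
  assert (Hx1 : 0 < x1) by (unfold x1; repeat apply Rmin_pos; lra).
  assert (Hx1s : x1 <= d1 /\ x1 <= d2 /\ x1 <= d3 /\ x1 <= d4 /\ x1 <= d /\ x1 <= /3 /\ x1 <= a/4).
  { unfold x1. repeat split.
    - eapply Rle_trans; [apply Rmin_l|]. eapply Rle_trans; [apply Rmin_l|]. apply Rmin_l.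
    - eapply Rle_trans; [apply Rmin_l|]. eapply Rle_trans; [apply Rmin_l|]. apply Rmin_r.
    - eapply Rle_trans; [apply Rmin_l|]. eapply Rle_trans; [apply Rmin_r|]. apply Rmin_l.
    - eapply Rle_trans; [apply Rmin_l|]. eapply Rle_trans; [apply Rmin_r|]. apply Rmin_r.
    - eapply Rle_trans; [apply Rmin_r|]. apply Rmin_l.
    - eapply Rle_trans; [apply Rmin_r|]. eapply Rle_trans; [apply Rmin_r|]. apply Rmin_l.
    - eapply Rle_trans; [apply Rmin_r|]. eapply Rle_trans; [apply Rmin_r|]. apply Rmin_r. }
  destruct Hx1s as [L1 [L2 [L3 [L4 [L5 [L6 L7]]]]]].
  assert (Bxi : forall x, 0 < x < x1 -> -(3/2)*a*W alpha p x <= xi x <= -(1/2)*a*W alpha p x).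
  { intros x Hx. pose proof (H2 x ltac:(lra)) as H. simpl in H.
    replace (- a * Rpower x alpha * powerRZ (ell x) m) with (- a * (Rpower x alpha * powerRZ (ell x) m)) in H by ring.
    rewrite W_conv in H by lra. fold p in H.
    pose proof (W_pos alpha p x).
    rewrite (Rabs_left1 (- a * W alpha p x)) in H by nra.
    apply Rabs_le_elim in H. nra. }
  assert (Bdxi : forall x, 0 < x < x1 -> -(3/2)*a*alpha*(W alpha p x / x) <= dxi x <= -(1/2)*a*alpha*(W alpha p x/x)).
  { intros x Hx. pose proof (H3 x ltac:(lra)) as H. simpl in H.
    replace (- a * alpha * Rpower x (alpha - 1) * powerRZ (ell x) m) with (- a * alpha * (Rpower x (alpha - 1) * powerRZ (ell x) m)) in H by ring.
    rewrite W_conv1 in H by lra. fold p in H.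
    assert (0 < W alpha p x / x) by (apply Rdiv_lt_0_compat; [apply W_pos|lra]).
    assert (0 < a*alpha*(W alpha p x / x)) by (apply Rmult_lt_0_compat; [nra|auto]).
    rewrite (Rabs_left1 (- a * alpha * (W alpha p x / x))) in H by lra.
    apply Rabs_le_elim in H. lra. }
  assert (Bg : forall x, 0 < x < x1 -> (1/2)*a*W alpha p x <= x - f x <= (3/2)*a*W alpha p x).
  { intros x Hx. pose proof (H1 x ltac:(lra)) as H. simpl in H.
    replace (a * Rpower x alpha * powerRZ (ell x) m) with (a * (Rpower x alpha * powerRZ (ell x) m)) in H by ring.
    rewrite W_conv in H by lra. fold p in H.
    pose proof (W_pos alpha p x).
    rewrite (Rabs_pos_eq (W alpha p x)) in H by lra.
    apply Rabs_le_elim in H. nra. }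
  assert (Bs : forall x, 0 < x < x1 -> (3/2)*a*W alpha p x <= x/2).
  { intros x Hx.
    assert (Hlx : ln x < 0) by (rewrite <- ln_1; apply ln_increasing; lra).
    assert (Hlx4 : ln x <= 2 * (- ln (3*a) - C) / (alpha - 1)).
    { assert (ln x <= ln d4) by (apply ln_mono; lra). unfold d4 in H. rewrite ln_exp in H. auto. }
    pose proof (HC (- ln x) ltac:(lra)) as HC'.
    assert (E1 : (alpha - 1) * ln x + p * ln (- ln x) <= - ln (3*a)).
    { assert ((alpha-1) * ln x <= 2 * (- ln (3*a) - C)).
      { apply (Rmult_le_compat_l (alpha - 1)) in Hlx4; [|lra].
        replace ((alpha - 1) * (2 * (- ln (3 * a) - C) / (alpha - 1))) with (2 * (- ln (3*a) - C)) in Hlx4 by (field; lra).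
        auto. }
      nra. }
    assert (E2 : W alpha p x = x * exp ((alpha - 1) * ln x + p * ln (- ln x))).
    { unfold W. replace (alpha * ln x + p * ln (- ln x)) with (ln x + ((alpha - 1) * ln x + p * ln (- ln x))) by ring.
      rewrite (exp_plus (ln x)), exp_ln; auto. lra. }
    assert (E3 : exp ((alpha - 1) * ln x + p * ln (- ln x)) <= / (3*a)).
    { rewrite <- (exp_ln (/ (3*a))) by (apply Rinv_0_lt_compat; lra). apply exp_mono.
      rewrite ln_Rinv by lra. auto. }
    rewrite E2.
    assert (x * exp ((alpha - 1) * ln x + p * ln (- ln x)) <= x * / (3*a)) by (apply Rmult_le_compat_l; lra).
    assert ((3/2)*a*(x * / (3*a)) = x/2) by (field; lra).
    assert (0 < (3/2)*a) by lra.
    apply (Rmult_le_compat_l ((3/2)*a)) in H; lra. }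
  assert (Hneg : forall x, 0 < x < d -> xi x < 0).
  { intros x Hx. destruct (Rlt_or_le (xi x) 0) as [Hl|Hl]; auto. exfalso.
    assert (Hpos : 0 < xi x) by (destruct Hl; auto; exfalso; apply (Hxi0 x Hx); auto).
    assert (Hq : xi (x1/2) < 0).
    { destruct (Bxi (x1/2) ltac:(lra)). pose proof (W_pos alpha p (x1/2)). nra. }
    destruct (Rlt_or_le x (x1/2)) as [Hxx|Hxx].
    - destruct (Bxi x ltac:(lra)). pose proof (W_pos alpha p x). nra.
    - destruct (Rle_lt_or_eq_dec _ _ Hxx) as [Hxx'|Hxx']; [|subst x; lra].
      destruct (Ranalysis5.IVT_interv xi (x1/2) x) as [z [Hz1 Hz2]]; auto.
      + intros t Ht. apply derivable_continuous_pt. exists (dxi t). apply Hxid. lra.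
      + apply (Hxi0 z); auto. lra. }
  exists x1. constructor; auto; try lra.
Qed.

Lemma orb_mono f xi dxi Psi a al p d x1 : Setting f xi dxi Psi a al p d x1 ->
  forall x0, 0 < x0 < x1 -> forall j k, (j <= k)%nat -> iterate f k x0 <= iterate f j x0.
Proof.
  intros HS x0 Hx0 j k Hjk. induction Hjk. lra.
  pose proof (orb_dec _ _ _ _ _ _ _ _ _ HS x0 Hx0 m). lra.
Qed.

Lemma orb_cv f xi dxi Psi a al p d x1 : Setting f xi dxi Psi a al p d x1 ->
  forall x0, 0 < x0 < x1 -> forall u : nat -> R,
  (forall n, 0 < u n <= iterate f n x0) -> Un_cv u 0.
Proof.
  intros HS x0 Hx0 u Hu e He.
  destruct (orb_small _ _ _ _ _ _ _ _ _ HS x0 Hx0 e He) as [K HK].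
  exists K. intros n Hn. unfold R_dist. rewrite Rminus_0_r.
  pose proof (Hu n). pose proof (orb_mono _ _ _ _ _ _ _ _ _ HS x0 Hx0 K n Hn).
  rewrite Rabs_pos_eq; lra.
Qed.

Lemma exist_triple f xi dxi Psi a al p d x1 : Setting f xi dxi Psi a al p d x1 ->
  forall x0, 0 < x0 < x1 -> forall eps, 0 < eps -> 2*eps < gX f x0 0 ->
  exists n tau y, disc_crit f x0 eps n /\ cont_crit d Psi x0 eps tau y.
Proof.
  intros HS x0 Hx0 eps He Hg. pose proof (Sx1d HS).
  destruct (disc_exist _ _ _ _ _ _ _ _ _ HS x0 Hx0 eps He Hg) as [n Hn].
  assert (Hy : exists y, iterate f n x0 <= y < iterate f (n-1) x0 /\ y - f y = 2*eps).
  { destruct Hn as [Hn1 [Hn2 Hn3]].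
    destruct n as [|j]; [lia|]. replace (S j - 1)%nat with j in * by lia.
    destruct (orb_basic _ _ _ _ _ _ _ _ _ HS x0 Hx0 (S j)) as [[H1 H2] _].
    destruct (orb_basic _ _ _ _ _ _ _ _ _ HS x0 Hx0 j) as [[H3 H4] _].
    pose proof (orb_dec _ _ _ _ _ _ _ _ _ HS x0 Hx0 j).
    simpl iterate in *.
    destruct (Rle_lt_or_eq_dec _ _ Hn2) as [Hl|Heq].
    - destruct (Ranalysis5.IVT_interv (fun t => t - f t - 2*eps) (f (iterate f j x0)) (iterate f j x0))
        as [z [Hz1 Hz2]]; auto; try lra.
      + intros t Ht. apply continuity_pt_minus; [apply continuity_pt_minus|].
        * apply derivable_continuous_pt, derivable_pt_id.
        * apply (f_cont _ _ _ _ _ _ _ _ _ HS). lra.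
        * apply derivable_continuous_pt, derivable_pt_const.
      + exists z. split; [|lra]. split; [lra|].
        destruct (Rle_lt_or_eq_dec _ _ (proj2 Hz1)); auto. subst z. lra.
    - exists (f (iterate f j x0)). lra. }
  destruct Hy as [y [Hy1 Hy2]].
  assert (Hyx : 0 < y <= x0).
  { destruct (orb_basic _ _ _ _ _ _ _ _ _ HS x0 Hx0 n) as [[H1 H2] _].
    destruct (orb_basic _ _ _ _ _ _ _ _ _ HS x0 Hx0 (n-1)) as [[H3 H4] _]. lra. }
  destruct (Sf HS y ltac:(lra)) as [Hfy HPfy].
  exists n, (Psi y - Psi x0), y. split; auto.
  unfold cont_crit, flow_pt. split.
  - pose proof (Psi_mono _ _ _ _ _ _ _ _ _ HS y x0 ltac:(lra) ltac:(lra) ltac:(lra)). lra.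
  - split. split; [lra|ring]. exists (f y). split; [split; [lra|]|lra]. rewrite HPfy. ring.
Qed.

Lemma mid_exists f xi dxi Psi a al p d x1 : Setting f xi dxi Psi a al p d x1 ->
  forall x0, 0 < x0 < x1 -> forall n,
  {z | iterate f (S n) x0 < z < iterate f n x0 /\ z + f z = 2 * iterate f (S n) x0}.
Proof.
  intros HS x0 Hx0 n. pose proof (Sx1d HS).
  assert (H1 := orb_basic _ _ _ _ _ _ _ _ _ HS x0 Hx0 (S n)).
  assert (H3 := orb_basic _ _ _ _ _ _ _ _ _ HS x0 Hx0 n).
  assert (H5 := orb_dec _ _ _ _ _ _ _ _ _ HS x0 Hx0 n).
  assert (H6 := orb_dec _ _ _ _ _ _ _ _ _ HS x0 Hx0 (S n)).
  simpl iterate in *.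
  destruct (Ranalysis5.IVT_interv (fun t => t + f t - 2 * f (iterate f n x0)) (f (iterate f n x0)) (iterate f n x0))
    as [z [Hz1 Hz2]]; try lra.
  - intros t Ht. apply continuity_pt_minus; [apply continuity_pt_plus|].
    + apply derivable_continuous_pt, derivable_pt_id.
    + apply (f_cont _ _ _ _ _ _ _ _ _ HS). lra.
    + apply derivable_continuous_pt, derivable_pt_const.
  - exists z. split; [|lra]. 
    destruct (Rle_lt_or_eq_dec _ _ (proj1 Hz1)) as [Ha|Ha]; [|subst z; lra].
    destruct (Rle_lt_or_eq_dec _ _ (proj2 Hz1)) as [Hb|Hb]; [|subst z; lra].
    lra.
Qed.

Theorem theoremB (f : R -> R) (a alpha : R) (m : Z) :
  parabolic_dulac f -> 0 < a -> 1 < alpha -> (m <= 0)%Z ->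
  little_o (fun x => f x - (x - a * Rpower x alpha * powerRZ (ell x) m))
           (fun x => Rpower x alpha * powerRZ (ell x) m) ->
  forall (d : R) (xi dxi Psi : R -> R),
    0 < d ->
    real_analytic_on 0 d xi ->
    (forall x, 0 < x < d -> derivable_pt_lim xi x (dxi x)) ->
    (forall x, 0 < x < d -> xi x <> 0) ->
    (forall x, 0 < x < d -> derivable_pt_lim Psi x (/ xi x)) ->
    (forall x, 0 < x < d -> 0 < f x < d /\ Psi (f x) = Psi x + 1) ->
    asymp_equiv xi (fun x => - a * Rpower x alpha * powerRZ (ell x) m) ->
    asymp_equiv dxi (fun x => - a * alpha * Rpower x (alpha - 1) * powerRZ (ell x) m) ->
    little_o (fun x => xi x - (- (x - f x) - / 2 * xi x * dxi x))
             (fun x => Rpower x (2 * alpha - 1) * powerRZ (ell x) (2 * m)) ->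
    exists x1, 0 < x1 /\ forall x0, 0 < x0 < x1 ->
      exists k : R -> R,
        (exists eps0, 0 < eps0 /\ forall eps, 0 < eps < eps0 ->
           (exists n, disc_crit f x0 eps n) /\
           (exists tau y, cont_crit d Psi x0 eps tau y) /\
           (forall n tau y, disc_crit f x0 eps n -> cont_crit d Psi x0 eps tau y ->
              cont_length eps tau y - disc_length f x0 eps n
              = Rpower eps (2 - / alpha) * Rpower (ell eps) (IZR m / alpha) * k eps)) /\
        (exists M eps1, 0 < eps1 /\ forall eps, 0 < eps < eps1 -> Rabs (k eps) <= M) /\
        high_amplitude_oscillatory k /\
        (exists delta M eps1, 0 < delta /\ 0 < eps1 /\ forall eps, 0 < eps < eps1 ->
           forall n tau y, disc_crit f x0 eps n -> cont_crit d Psi x0 eps tau y ->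
             Rabs (cont_length eps tau y - disc_length f x0 eps n)
             <= M * Rpower eps (1 + delta)).
Proof.
  intros Hpar Ha Hal Hm Hf d xi dxi Psi Hd Han Hxid Hxi0 HPsi HfP Hxi Hdxi Hxieq.
  destruct (build_setting f a alpha m d xi dxi Psi Ha Hal Hm Hf Hd Hxid Hxi0 HPsi HfP Hxi Hdxi) as [x1 HS].
  set (p := - IZR m) in HS.
  assert (Hp : 0 <= p) by exact (Sp HS).
  exists x1. split; [exact (Sx1 HS)|]. intros x0 Hx0.
  pose proof (Sx1d HS) as Hx1d. pose proof (Sx13 HS) as Hx13.
  assert (HNeq : forall eps, 0 < eps < 1 ->
     Rpower eps (2 - / alpha) * Rpower (ell eps) (IZR m / alpha) = Nf alpha p eps).
  { intros eps He. rewrite N_conv by auto. unfold Nf. f_equal; try (unfold p; field). }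
  assert (HNpos : forall eps, 0 < Nf alpha p eps) by (intros; apply exp_pos).
  assert (Hfx0 := Sf HS x0 ltac:(lra)).
  assert (Hg0 : 0 < gX f x0 0 < x0).
  { unfold gX. simpl. pose proof (f_lt _ _ _ _ _ _ _ _ _ HS x0 ltac:(lra)). lra. }
  set (eps0 := gX f x0 0 / 2).
  assert (Heps0 : 0 < eps0 < 1) by (unfold eps0; lra).
  set (Dv := fun eps n y => y - iterate f n x0 + 2*eps*(Psi y - Psi (iterate f n x0))).
  assert (Hkey : forall eps n tau y, 0 < eps < eps0 -> disc_crit f x0 eps n -> cont_crit d Psi x0 eps tau y ->
     (1 <= n)%nat /\ iterate f n x0 <= y < iterate f (n-1) x0 /\ y - f y = 2*eps /\
     cont_length eps tau y - disc_length f x0 eps n = Dv eps n y).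
  { intros eps n tau y He Hn Hc.
    destruct (triple _ _ _ _ _ _ _ _ _ HS x0 Hx0 eps n tau y ltac:(lra) ltac:(unfold eps0 in He; lra) Hn Hc)
      as [T1 [T2 [T3 T4]]].
    repeat split; auto; try lra.
    apply (diff_formula _ _ _ _ _ _ _ _ _ HS x0 Hx0); auto. }
  assert (Huniq : forall eps n tau y n' tau' y', 0 < eps < eps0 ->
     disc_crit f x0 eps n -> cont_crit d Psi x0 eps tau y ->
     disc_crit f x0 eps n' -> cont_crit d Psi x0 eps tau' y' ->
     cont_length eps tau y - disc_length f x0 eps n = cont_length eps tau' y' - disc_length f x0 eps n').
  { intros eps n tau y n' tau' y' He Hn Hc Hn' Hc'.
    destruct (Hkey eps n tau y He Hn Hc) as [A1 [A2 [A3 A4]]].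
    destruct (Hkey eps n' tau' y' He Hn' Hc') as [B1 [B2 [B3 B4]]].
    pose proof (disc_unique _ _ _ _ _ _ _ _ _ HS x0 Hx0 eps n n' Hn Hn'). subst n'.
    pose proof (y_unique _ _ _ _ _ _ _ _ _ HS x0 Hx0 n y y' A1 A2 B2 ltac:(lra)). subst y'.
    rewrite A4, B4. auto. }
  set (Pk := fun eps v => forall n tau y, disc_crit f x0 eps n -> cont_crit d Psi x0 eps tau y ->
              cont_length eps tau y - disc_length f x0 eps n
              = Rpower eps (2 - / alpha) * Rpower (ell eps) (IZR m / alpha) * v).
  set (k := fun eps => epsilon (inhabits 0) (Pk eps)).
  assert (Hex : forall eps, 0 < eps < eps0 -> exists n tau y, disc_crit f x0 eps n /\ cont_crit d Psi x0 eps tau y).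
  { intros eps He. apply (exist_triple _ _ _ _ _ _ _ _ _ HS x0 Hx0); unfold eps0 in He; lra. }
  assert (Hk : forall eps, 0 < eps < eps0 -> Pk eps (k eps)).
  { intros eps He. unfold k. apply epsilon_spec.
    destruct (Hex eps He) as [n0 [tau0 [y0 [H1 H2]]]].
    exists ((cont_length eps tau0 y0 - disc_length f x0 eps n0) / Nf alpha p eps).
    intros n tau y Hn Hc. rewrite (Huniq eps n tau y n0 tau0 y0 He Hn Hc H1 H2).
    rewrite HNeq by lra. field. apply Rgt_not_eq, HNpos. }
  assert (Hkv : forall eps n tau y, 0 < eps < eps0 -> disc_crit f x0 eps n -> cont_crit d Psi x0 eps tau y ->
     cont_length eps tau y - disc_length f x0 eps n = Nf alpha p eps * k eps).
  { intros eps n tau y He Hn Hc. rewrite (Hk eps He n tau y Hn Hc). rewrite HNeq by lra. auto. }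
  assert (Hbnd : forall eps, 0 < eps < eps0 -> 0 <= k eps <= Cu a alpha).
  { intros eps He. destruct (Hex eps He) as [n [tau [y [Hn Hc]]]].
    destruct (Hkey eps n tau y He Hn Hc) as [A1 [A2 [A3 A4]]].
    pose proof (Hkv eps n tau y He Hn Hc) as E1. rewrite A4 in E1.
    destruct (D_repr _ _ _ _ _ _ _ _ _ HS x0 Hx0 eps n y A1 A2 A3) as [Hfu [c [Hc1 Hc2]]].
    unfold Dv in E1. rewrite Hc2 in E1.
    assert (Hy : 0 < y < x1).
    { destruct (orb_basic _ _ _ _ _ _ _ _ _ HS x0 Hx0 n) as [[H1 H2] _].
      destruct (orb_basic _ _ _ _ _ _ _ _ _ HS x0 Hx0 (n-1)) as [[H3 H4] _]. lra. }
    destruct (D_up _ _ _ _ _ _ _ _ _ HS y eps c ((iterate f n x0 - f y) * (y - iterate f n x0)) Hy A3 Hc1)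
      as [U1 U2].
    { split. apply Rmult_le_pos; lra.
      assert (Hid : eps^2 - (iterate f n x0 - f y) * (y - iterate f n x0) = (iterate f n x0 - (f y + y)/2)^2)
        by (replace eps with ((y - f y)/2) by lra; field).
      pose proof (pow2_ge_0 (iterate f n x0 - (f y + y)/2)). lra. }
    assert (E2 : eps * ((iterate f n x0 - f y) * (y - iterate f n x0)) * (- dxi c / xi c ^ 2) = Nf alpha p eps * k eps)
      by (rewrite <- E1; ring).
    rewrite E2 in U1, U2.
    pose proof (HNpos eps). split; nra. }
  exists k. split.
  { exists eps0. split; [lra|]. intros eps He.
    destruct (Hex eps He) as [n [tau [y [Hn Hc]]]].
    split; [eauto|]. split; [eauto|]. apply Hk; auto. }
  split.
  { exists (Cu a alpha), eps0. split; [lra|]. intros eps He.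
    destruct (Hbnd eps He). rewrite Rabs_pos_eq; lra. }
  split.
  {
    set (Cl0 := Cl a alpha p). assert (HCl : 0 < Cl0) by apply exp_pos.
    set (e1 := fun n => gX f x0 (S n) / 2).
    set (zf := fun n => proj1_sig (mid_exists _ _ _ _ _ _ _ _ _ HS x0 Hx0 n)).
    set (e2 := fun n => (zf n - f (zf n)) / 2).
    assert (Hz : forall n, iterate f (S n) x0 < zf n < iterate f n x0 /\ zf n + f (zf n) = 2 * iterate f (S n) x0).
    { intros n. unfold zf. destruct (mid_exists _ _ _ _ _ _ _ _ _ HS x0 Hx0 n) as [z Hz']. simpl. auto. }
    assert (HgXn : forall n, gX f x0 n <= gX f x0 0) by (intros n; apply (gX_mono _ _ _ _ _ _ _ _ _ HS x0 Hx0); lia).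
    assert (He1 : forall n, 0 < e1 n < eps0 /\ e1 n <= iterate f n x0 /\ k (e1 n) = 0).
    { intros n. unfold e1.
      pose proof (gX_dec _ _ _ _ _ _ _ _ _ HS x0 Hx0 n) as G1. pose proof (HgXn n).
      pose proof (orb_dec _ _ _ _ _ _ _ _ _ HS x0 Hx0 n).
      pose proof (orb_dec _ _ _ _ _ _ _ _ _ HS x0 Hx0 (S n)).
      destruct (orb_basic _ _ _ _ _ _ _ _ _ HS x0 Hx0 (S n)) as [[B1 B2] B3].
      destruct (orb_basic _ _ _ _ _ _ _ _ _ HS x0 Hx0 (S (S n))) as [[B4 B5] B6].
      assert (Hpos : 0 < gX f x0 (S n)) by (unfold gX; lra).
      assert (Hlt : gX f x0 (S n) / 2 < eps0) by (unfold eps0; lra).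
      split; [lra|]. split; [unfold gX; lra|].
      assert (Hd1 : disc_crit f x0 (gX f x0 (S n) / 2) (S n)).
      { unfold disc_crit. replace (S n - 1)%nat with n by lia. unfold gX in *. repeat split; [lia|lra|lra]. }
      assert (Hc1 : cont_crit d Psi x0 (gX f x0 (S n) / 2) (INR (S n)) (iterate f (S n) x0)).
      { unfold cont_crit, flow_pt. split; [apply pos_INR|]. split; [split; [lra|auto]|].
        exists (iterate f (S (S n)) x0). split; [split; [lra|]|unfold gX; lra].
        rewrite B6, (S_INR (S n)). ring. }
      pose proof (Hkv (gX f x0 (S n) / 2) (S n) (INR (S n)) (iterate f (S n) x0) ltac:(lra) Hd1 Hc1) as E.
      unfold cont_length, disc_length in E.
      assert (HZ : Nf alpha p (gX f x0 (S n) / 2) * k (gX f x0 (S n) / 2) = 0) by lra.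
      pose proof (HNpos (gX f x0 (S n) / 2)).
      destruct (Rmult_integral _ _ HZ); [lra|auto]. }
    assert (He2 : forall n, 0 < e2 n < eps0 /\ e2 n <= iterate f n x0 /\ Cl0 <= k (e2 n)).
    { intros n. destruct (Hz n) as [[Z1 Z2] Z3].
      destruct (orb_basic _ _ _ _ _ _ _ _ _ HS x0 Hx0 n) as [[B1 B2] B3].
      destruct (orb_basic _ _ _ _ _ _ _ _ _ HS x0 Hx0 (S n)) as [[B1' B2'] B3'].
      destruct (Sf HS (zf n) ltac:(lra)) as [Hfz HPfz].
      pose proof (gy_interval _ _ _ _ _ _ _ _ _ HS x0 Hx0 (S n) (zf n) ltac:(lia)) as G.
      replace (S n - 1)%nat with n in G by lia.
      destruct (G ltac:(lra)) as [G1 G2].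
      pose proof (HgXn n).
      assert (Hpos : 0 < e2 n).
      { unfold e2. pose proof (gX_dec _ _ _ _ _ _ _ _ _ HS x0 Hx0 n). 
        destruct (orb_basic _ _ _ _ _ _ _ _ _ HS x0 Hx0 (S (S n))) as [[B4 B5] B6].
        unfold gX in *. simpl iterate in *. lra. }
      assert (Hlt : e2 n < eps0) by (unfold e2, eps0; lra).
      split; [lra|]. split; [unfold e2; lra|].
      assert (Hd1 : disc_crit f x0 (e2 n) (S n)).
      { unfold disc_crit. replace (S n - 1)%nat with n by lia. unfold gX, e2 in *. repeat split; [lia|lra|lra]. }
      assert (Hc1 : cont_crit d Psi x0 (e2 n) (Psi (zf n) - Psi x0) (zf n)).
      { unfold cont_crit, flow_pt. split.
        - pose proof (Psi_mono _ _ _ _ _ _ _ _ _ HS (zf n) x0 ltac:(lra) ltac:(lra) ltac:(lra)). lra.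
        - split; [split; [lra|ring]|]. exists (f (zf n)). split; [split; [lra|]|unfold e2; lra].
          rewrite HPfz. ring. }
      destruct (Hkey (e2 n) (S n) (Psi (zf n) - Psi x0) (zf n) ltac:(lra) Hd1 Hc1) as [A1 [A2 [A3 A4]]].
      pose proof (Hkv (e2 n) (S n) (Psi (zf n) - Psi x0) (zf n) ltac:(lra) Hd1 Hc1) as E. rewrite A4 in E.
      destruct (D_repr _ _ _ _ _ _ _ _ _ HS x0 Hx0 (e2 n) (S n) (zf n) A1 A2 A3) as [Hfu [c [Hc1' Hc2]]].
      unfold Dv in E. rewrite Hc2 in E.
      assert (Q1 : iterate f (S n) x0 - f (zf n) = e2 n) by (unfold e2; lra).
      assert (Q2 : zf n - iterate f (S n) x0 = e2 n) by (unfold e2; lra).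
      rewrite Q1, Q2 in E.
      pose proof (D_low _ _ _ _ _ _ _ _ _ HS (zf n) (e2 n) c ltac:(lra) A3 Hc1') as L.
      replace (e2 n * e2 n * e2 n * (- dxi c / xi c ^ 2)) with (e2 n * e2 n ^ 2 * (- dxi c / xi c ^ 2)) in E by ring.
      rewrite E in L. fold Cl0 in L. pose proof (HNpos (e2 n)). nra. }
    exists e1, e2, (Cl0/3), (2*Cl0/3).
    split; [intros n; apply He1|]. split; [intros n; apply He2|].
    split. { apply (orb_cv _ _ _ _ _ _ _ _ _ HS x0 Hx0). intros n. destruct (He1 n) as [[? ?] [? ?]]. split; lra. }
    split. { apply (orb_cv _ _ _ _ _ _ _ _ _ HS x0 Hx0). intros n. destruct (He2 n) as [[? ?] [? ?]]. split; lra. }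
    split; [lra|].
    intros n. destruct (He1 n) as [_ [_ K1]]. destruct (He2 n) as [_ [_ K2]]. lra. }
  set (delta := (1 - / alpha) / 2).
  assert (Hia : / alpha < 1) by (rewrite <- Rinv_1; apply Rinv_lt_contravar; lra).
  assert (Hdel : 0 < delta) by (unfold delta; lra).
  assert (Hpa : 0 <= p / alpha) by (apply Rmult_le_pos; [lra|left; apply Rinv_0_lt_compat; lra]).
  destruct (logbound (p / alpha) delta Hpa Hdel) as [C2 HC2].
  exists delta, (Cu a alpha * exp C2), eps0. split; [auto|]. split; [lra|].
  intros eps He n tau y Hn Hc.
  rewrite (Hkv eps n tau y He Hn Hc).
  destruct (Hbnd eps He) as [K1 K2].
  pose proof (HNpos eps).
  rewrite Rabs_pos_eq by (apply Rmult_le_pos; lra).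
  assert (HN : Nf alpha p eps <= exp C2 * Rpower eps (1 + delta)).
  { unfold Nf, Rpower. rewrite <- exp_plus. apply exp_mono.
    assert (HlE : ln eps < 0) by (rewrite <- ln_1; apply ln_increasing; lra).
    pose proof (HC2 (- ln eps) ltac:(lra)). unfold delta in *. lra. }
  assert (0 < Cu a alpha) by apply exp_pos.
  apply Rle_trans with (Cu a alpha * Nf alpha p eps).
  { nra. }
  rewrite Rmult_assoc. apply Rmult_le_compat_l; lra.
Qed.
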